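(* For every positive integer $n$ and every function $\sigma\colon E(K_{4n})\to\{-1,1\}$ with $\sigma\left(E(K_{4n})\right)=0$, there is a perfect matching $M$ in $K_{4n}$ with $\sigma(M)=0$.
   Context: $K_{4n}$ denotes the complete graph on $4n$ vertices and $E(K_{4n})$ its edge set. For a set $F$ of edges, $\sigma(F)=\sum_{e\in F}\sigma(e)$. *)

(* Defs.v *)
From mathcomp Require Import all_boot all_order all_algebra.
Set Implicit Arguments. Unset Strict Implicit. Unset Printing Implicit Defensive.
Import GRing.Theory Num.Theory.
Local Open Scope ring_scope.

(* Complete graph K_m on vertex set 'I_m: edges are the 2-element subsets. *)
Definition is_edge (m : nat) (e : {set 'I_m}) : bool := #|e| == 2%N.

Definition edges (m : nat) : {set {set 'I_m}} := [set e | is_edge e].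

Definition sigma_sum (m : nat) (sigma : {set 'I_m} -> int)
  (F : {set {set 'I_m}}) : int := \sum_(e in F) sigma e.

Definition perfect_matching (m : nat) (M : {set {set 'I_m}}) : Prop :=
  M \subset edges m /\
  forall v : 'I_m, exists! e, e \in M /\ v \in e.

(* Main.v *)
Require Import Defs.
From mathcomp Require Import all_boot all_order all_algebra.
From mathcomp Require Import zify ring lra.
From Stdlib Require Import Classical_Prop.
Set Implicit Arguments. Unset Strict Implicit. Unset Printing Implicit Defensive.
Import Order.TTheory GRing.Theory Num.Theory.
Local Open Scope ring_scope.

Definition wv (m : nat) (s : {set 'I_m} -> int) (u v : 'I_m) : int := s [set u; v].
Definition KK (m : nat) (s : {set 'I_m} -> int) (W : {set 'I_m}) : int :=
  \sum_(e in edges m | e \subset W) s e.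
Definition cr (m : nat) (s : {set 'I_m} -> int) (X Y : {set 'I_m}) : int :=
  \sum_(u in X) \sum_(v in Y) wv s u v.

Lemma in_edges m (e : {set 'I_m}) : (e \in edges m) = (#|e| == 2)%N.
Proof. by rewrite /edges inE /is_edge. Qed.

Lemma edge2 m (u v : 'I_m) : ([set u; v] \in edges m) = (u != v).
Proof. by rewrite in_edges cards2; case: (u != v). Qed.

Lemma sum2 m (F : 'I_m -> int) u u' : u != u' ->
  \sum_(x in [set u; u']) F x = F u + F u'.
Proof. move=> h; rewrite big_setU1 ?big_set1 //; by rewrite inE. Qed.

Lemma sumU (T : finType) (F : T -> int) (A B : {set T}) : [disjoint A & B] ->
  \sum_(x in A :|: B) F x = \sum_(x in A) F x + \sum_(x in B) F x.
Proof.
move=> d; rewrite -bigU //; apply: eq_bigl => x; by rewrite !inE.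
Qed.

Lemma cr2 m s (u u' v v' : 'I_m) : u != u' -> v != v' ->
  cr s [set u; u'] [set v; v'] = wv s u v + wv s u v' + wv s u' v + wv s u' v'.
Proof. by move=> h1 h2; rewrite /cr sum2 // !sum2 // addrA. Qed.

Lemma crU m s (X Y Z : {set 'I_m}) : [disjoint X & Y] ->
  cr s (X :|: Y) Z = cr s X Z + cr s Y Z.
Proof. by move=> d; rewrite /cr sumU. Qed.

Lemma cr_cover m s (X : {set 'I_m}) R : trivIset R ->
  cr s X (cover R) = \sum_(f in R) cr s X f.
Proof.
move=> tR; rewrite /cr; under eq_bigr do rewrite big_trivIset //.
by rewrite exchange_big.
Qed.

Lemma KK_edge m s (f : {set 'I_m}) : f \in edges m -> KK s f = s f.
Proof.
move=> fe; rewrite /KK (big_pred1 f) // => e /=.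
apply/andP/eqP => [[ee sef]|->]; last by rewrite fe subxx.
apply/eqP; rewrite eqEcard sef /=; move: ee fe; rewrite !in_edges => /eqP-> /eqP->.
done.
Qed.

Lemma KK0 m s : KK s (set0 : {set 'I_m}) = 0.
Proof.
rewrite /KK big_pred0 // => e; apply/andP => [[ee]]; rewrite subset0 => /eqP E.
by move: ee; rewrite E in_edges cards0.
Qed.

Lemma disjP (T : finType) (A B : {set T}) :
  reflect (forall x, x \in A -> x \notin B) [disjoint A & B].
Proof.
rewrite disjoints_subset; apply: (iffP subsetP) => H x /H; by rewrite inE.
Qed.

Lemma sub2 (T : finType) (x y : T) (A : {set T}) :
  ([set x; y] \subset A) = (x \in A) && (y \in A).
Proof. by rewrite subUset !sub1set. Qed.

Lemma KK_split m s (X Y : {set 'I_m}) : [disjoint X & Y] ->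
  KK s (X :|: Y) = KK s X + KK s Y + cr s X Y.
Proof.
move=> d.
have dXY : forall x, x \in X -> x \notin Y by apply/disjP.
rewrite /KK (bigID (fun e : {set 'I_m} => e \subset X)) /= -addrA; congr (_ + _).
  apply: eq_bigl => e; case sX: (e \subset X); rewrite ?andbT ?andbF //.
  by rewrite (subset_trans sX (subsetUl X Y)) andbT.
rewrite (bigID (fun e : {set 'I_m} => e \subset Y)) /=; congr (_ + _).
  apply: eq_bigl => e; case sY: (e \subset Y); rewrite ?andbT ?andbF //.
  case ee: (e \in edges m) => //=.
  rewrite (subset_trans sY (subsetUr X Y)) /=.
  move: ee sY; rewrite in_edges => /cards2P [x [y [xy ->]]].
  rewrite !sub2 => /andP[xY yY].
  by apply/negP => /andP[xX _]; move: (dXY _ xX); rewrite xY.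
pose h := fun p : 'I_m * 'I_m => [set p.1; p.2].
pose PS := [pred p : 'I_m * 'I_m | (p.1 \in X) && (p.2 \in Y)].
have -> : cr s X Y = \sum_(e in [set h p | p in PS]) s e.
  rewrite big_imset /=.
    rewrite /cr pair_big /=; apply: eq_bigl => p; by rewrite inE.
  move=> [a b] [a' b']; rewrite !inE /= => /andP[aX bY] /andP[a'X b'Y]; rewrite /h /= => E.
  have : a \in [set a'; b'] by rewrite -E !inE eqxx.
  rewrite !inE => /orP[/eqP aa|/eqP ab]; last by move: (dXY _ aX); rewrite ab b'Y.
  subst a'.
  have : b \in [set a; b'] by rewrite -E !inE eqxx orbT.
  rewrite !inE => /orP[/eqP ba|/eqP ->] //.
  by move: (dXY _ aX); rewrite -ba bY.
apply: eq_bigl => e; apply/idP/imsetP.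
  move=> /andP[/andP[/andP[ee sXY] nX] nY].
  move: ee; rewrite in_edges => /cards2P [x [y [xy E]]]; subst e.
  move: sXY nX nY; rewrite !sub2 !inE => /andP[/orP[xX|xY] /orP[yX|yY]];
    rewrite ?xX ?yX ?xY ?yY //= ?andbT.
  - by move=> _ _; exists (x, y); rewrite // inE /= xX yY.
  - move=> _ _; exists (y, x); first by rewrite inE /= yX xY.
    by rewrite /h /= setUC.
move=> [[a b] /andP [/= aX bY] ->]; rewrite /h /=.
have ab : a != b by apply/eqP => E; move: (dXY _ aX); rewrite E bY.
rewrite edge2 ab /= !sub2 !inE aX bY /= orbT /=.
by rewrite andbT (negbTE (dXY _ aX)) (disjointFl d bY).
Qed.

Lemma cover_step (T : finType) (R : {set {set T}}) f : trivIset R -> f \in R ->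
  cover R = f :|: cover (R :\ f) /\ [disjoint f & cover (R :\ f)].
Proof.
move=> tR fR; rewrite coverD1 //; split.
  apply/setP => x; rewrite !inE; case xf: (x \in f) => //=.
  by apply/bigcupP; exists f.
by apply/disjP => x xf; rewrite !inE xf.
Qed.

Lemma KK_step m s (R : {set {set 'I_m}}) f : R \subset edges m -> trivIset R -> f \in R ->
  KK s (cover R) = s f + KK s (cover (R :\ f)) + \sum_(g in R :\ f) cr s f g.
Proof.
move=> RE tR fR; have [-> d] := cover_step tR fR.
rewrite KK_split // KK_edge; last by apply: (subsetP RE).
rewrite cr_cover //; apply: trivIsetS tR; exact: subsetDl.
Qed.

Lemma KK_mod m s (d : int) (R : {set {set 'I_m}}) : R \subset edges m -> trivIset R ->
  (forall f1 f2, f1 \in R -> f2 \in R -> f1 != f2 -> (d %| cr s f1 f2)%Z) ->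
  (d %| KK s (cover R) - \sum_(e in R) s e)%Z.
Proof.
have [k Hk] : exists k, #|R| = k by eauto.
elim: k R Hk => [|k IH] R Hk RE tR Hd.
  rewrite (cards0_eq Hk) /cover !big_set0 KK0 subrr; exact: dvdz0.
have : R != set0 by apply/negP => /eqP E; rewrite E cards0 in Hk.
case/set0Pn => f fR.
rewrite (KK_step s RE tR fR) (big_setD1 f fR) /=.
have H1 : (d %| KK s (cover (R :\ f)) - \sum_(e in R :\ f) s e)%Z.
  apply: IH.
  - by move: Hk; rewrite (cardsD1 f) fR => -[].
  - exact: subset_trans (subsetDl R [set f]) RE.
  - apply: trivIsetS tR; exact: subsetDl.
  - by move=> f1 f2; rewrite !inE => /andP[_ ?] /andP[_ ?]; apply: Hd.
have H2 : (d %| \sum_(g in R :\ f) cr s f g)%Z.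
  apply: rpred_sum => g; rewrite !inE => /andP[gf gR]; apply: Hd => //.
  by rewrite eq_sym.
have -> : s f + KK s (cover (R :\ f)) + \sum_(g in R :\ f) cr s f g -
   (s f + \sum_(e in R :\ f) s e) =
   (KK s (cover (R :\ f)) - \sum_(e in R :\ f) s e) + \sum_(g in R :\ f) cr s f g.
  ring.
exact: rpredD.
Qed.

Lemma KK_ineq m s (R : {set {set 'I_m}}) : R \subset edges m -> trivIset R ->
  (forall f1 f2, f1 \in R -> f2 \in R -> f1 != f2 -> 2 * (s f1 + s f2) <= cr s f1 f2) ->
  2 * (#|R|%:R) * (\sum_(e in R) s e) <= KK s (cover R) + \sum_(e in R) s e.
Proof.
have [k Hk] : exists k, #|R| = k by eauto.
elim: k R Hk => [|k IH] R Hk RE tR Hd.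
  by rewrite Hk mulr0 mul0r (cards0_eq Hk) /cover !big_set0 KK0.
have : R != set0 by apply/negP => /eqP E; rewrite E cards0 in Hk.
case/set0Pn => f fR.
have Hk' : #|R :\ f| = k by move: Hk; rewrite (cardsD1 f) fR => -[].
rewrite (KK_step s RE tR fR) (big_setD1 f fR) /= Hk.
have H1 := IH (R :\ f) Hk' (subset_trans (subsetDl R [set f]) RE)
  (trivIsetS (subsetDl R [set f]) tR)
  (fun f1 f2 => fun h1 h2 => Hd f1 f2 (subsetP (subsetDl R [set f]) f1 h1)
       (subsetP (subsetDl R [set f]) f2 h2)).
have H2 : \sum_(g in R :\ f) 2 * (s f + s g) <= \sum_(g in R :\ f) cr s f g.
  apply: ler_sum => g; rewrite !inE => /andP[gf gR]; apply: Hd => //.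
  by rewrite eq_sym.
move: H2; rewrite -mulr_sumr big_split /= sumr_const Hk'.
set S := \sum_(e in R :\ f) s e; set C := \sum_(g in R :\ f) cr s f g.
set KR := KK s (cover (R :\ f)).
move: H1; rewrite Hk' -/S -/KR => H1 H2.
rewrite -mulr_natl in H2.
have -> : (k.+1%:R : int) = k%:R + 1 by rewrite -natr1.
set kk := (k%:R : int) in H1 H2 *.
nia.
Qed.

Definition pmb m (M : {set {set 'I_m}}) : bool :=
  [&& M \subset edges m, trivIset M & cover M == setT].

Lemma pmP m (M : {set {set 'I_m}}) : perfect_matching M <-> pmb M.
Proof.
split.
  move=> [ME Hu]; rewrite /pmb ME /=; apply/andP; split.
    apply/trivIsetP => A B AM BM AB; apply/disjP => x xA; apply/negP => xB.
    have [e [[eM xe] eu]] := Hu x.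
    move/negP: AB; apply; apply/eqP.
    by rewrite -(eu A (conj AM xA)) (eu B (conj BM xB)).
  apply/eqP/setP => x; rewrite inE; have [e [[eM xe] _]] := Hu x.
  by apply/bigcupP; exists e.
move=> /and3P[ME tM /eqP cM]; split => // v.
have : v \in cover M by rewrite cM inE.
move=> /bigcupP [e eM ve]; exists e; split => // e' [e'M ve'].
apply/eqP; apply/negP => /negP ne.
move/trivIsetP: tM => tM.
have := tM _ _ eM e'M ne.
by move/disjP/(_ v ve); rewrite ve'.
Qed.

Lemma disj2 (T : finType) (a b : T) (A : {set T}) :
  [disjoint [set a; b] & A] = (a \notin A) && (b \notin A).
Proof.
apply/disjP/andP => [H|[Ha Hb] x]; first by split; apply: H; rewrite !inE eqxx ?orbT.
by rewrite !inE => /orP[]/eqP->.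
Qed.

Definition sw m (M : {set {set 'I_m}}) (g h : {set 'I_m}) (u u' v v' : 'I_m) :=
  (M :\ g :\ h) :|: [set [set u; v]; [set u'; v']].

Lemma pm_edge m (M : {set {set 'I_m}}) g : pmb M -> g \in M -> #|g| = 2%N.
Proof. by move=> /and3P[ME _ _] gM; apply/eqP; rewrite -in_edges (subsetP ME). Qed.

Lemma pm_disj m (M : {set {set 'I_m}}) g h : pmb M -> g \in M -> h \in M -> g != h ->
  [disjoint g & h].
Proof. by move=> /and3P[_ /trivIsetP tM _]; apply: tM. Qed.

Lemma pm_cover m (M : {set {set 'I_m}}) x : pmb M -> exists2 e, e \in M & x \in e.
Proof.
move=> /and3P[_ _ /eqP cM]; have : x \in cover M by rewrite cM inE.
by move/bigcupP.
Qed.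

Lemma sw_facts m (M : {set {set 'I_m}}) g h (u u' v v' : 'I_m) :
  pmb M -> g \in M -> h \in M -> g != h -> g = [set u; u'] -> h = [set v; v'] ->
  [/\ u != u', v != v', u != v & u != v'] /\ (u' != v /\ u' != v').
Proof.
move=> pM gM hM gh eg eh.
have := pm_edge pM gM; have := pm_edge pM hM; rewrite eg eh !cards2.
case: eqP => // _; case: eqP => // _ _ _.
have := pm_disj pM gM hM gh; rewrite eg eh disj2 !inE !negb_or.
by move=> /andP[/andP[-> ->] /andP[-> ->]].
Qed.

Lemma sw_pm m (M : {set {set 'I_m}}) g h (u u' v v' : 'I_m) :
  pmb M -> g \in M -> h \in M -> g != h -> g = [set u; u'] -> h = [set v; v'] ->
  pmb (sw M g h u u' v v').
Proof.
move=> pM gM hM gh eg eh.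
have [[uu' vv' uv uv'] [u'v u'v']] := sw_facts pM gM hM gh eg eh.
have Rnot : forall A, A \in M :\ g :\ h -> [/\ u \notin A, u' \notin A, v \notin A & v' \notin A].
  move=> A; rewrite !inE => /and3P[Ah Ag AM].
  have := pm_disj pM AM gM Ag; have := pm_disj pM AM hM Ah.
  rewrite eg eh !(disjoint_sym A) !disj2 => /andP[-> ->] /andP[-> ->]; done.
have /and3P[ME tM _] := pM.
apply/and3P; split.
- apply/subsetP => A; rewrite !inE => /orP[/and3P[_ _ AM]|/orP[]/eqP->].
  + by move: (subsetP ME A AM); rewrite inE.
  + by rewrite /is_edge cards2 uv.
  + by rewrite /is_edge cards2 u'v'.
- apply/trivIsetP => A B.
  have key : forall A B, A \in M :\ g :\ h -> B \in [set [set u; v]; [set u'; v']] ->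
      [disjoint A & B].
    move=> A0 B0 /Rnot [nu nu' nv nv']; rewrite !inE => /orP[]/eqP->;
      by rewrite disjoint_sym disj2 ?nu ?nv ?nu' ?nv'.
  rewrite [A \in _]inE [B \in _]inE => /orP[AR|AN] /orP[BR|BN] AB.
  + move: AR BR; rewrite !inE => /and3P[_ _ AM] /and3P[_ _ BM].
    by move/trivIsetP: tM; apply.
  + exact: key.
  + by rewrite disjoint_sym; apply: key.
  + move: AN BN AB; rewrite !inE => /orP[]/eqP-> /orP[]/eqP->; rewrite ?eqxx //= => _;
    rewrite disj2 !inE !negb_or.
    by rewrite uu' uv' (eq_sym v) u'v vv'.
    by rewrite (eq_sym u') uu' u'v (eq_sym v') uv' (eq_sym v') vv'.
- apply/eqP/setP => x; rewrite inE; have [e eM xe] := pm_cover x pM.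
  apply/bigcupP.
  case: (e =P g) => [Eg|ng].
    move: xe; rewrite Eg eg !inE => /orP[]/eqP->.
      by exists [set u; v]; rewrite !inE ?eqxx ?orbT.
    by exists [set u'; v']; rewrite !inE ?eqxx ?orbT.
  case: (e =P h) => [Eh|nh].
    move: xe; rewrite Eh eh !inE => /orP[]/eqP->.
      by exists [set u; v]; rewrite !inE ?eqxx ?orbT.
    by exists [set u'; v']; rewrite !inE ?eqxx ?orbT.
  exists e => //; rewrite !inE eM andbT.
  by apply/orP; left; apply/andP; split; apply/eqP.
Qed.

Lemma sum2T (T : finType) (F : T -> int) u u' : u != u' ->
  \sum_(x in [set u; u']) F x = F u + F u'.
Proof. move=> h; rewrite big_setU1 ?big_set1 //; by rewrite inE. Qed.

Lemma sw_sum m s (M : {set {set 'I_m}}) g h (u u' v v' : 'I_m) :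
  pmb M -> g \in M -> h \in M -> g != h -> g = [set u; u'] -> h = [set v; v'] ->
  sigma_sum s (sw M g h u u' v v') = sigma_sum s M - s g - s h + wv s u v + wv s u' v'.
Proof.
move=> pM gM hM gh eg eh.
have [[uu' vv' uv uv'] [u'v u'v']] := sw_facts pM gM hM gh eg eh.
have Rnot : forall A, A \in M :\ g :\ h -> u \notin A /\ u' \notin A.
  move=> A; rewrite !inE => /and3P[Ah Ag AM].
  have := pm_disj pM AM gM Ag.
  by rewrite eg !(disjoint_sym A) !disj2 => /andP[-> ->].
rewrite /sigma_sum sumU; last first.
  apply/disjP => A /Rnot [nu nu']; rewrite !inE; apply/negP => /orP[]/eqP E;
    [move: nu|move: nu']; by rewrite E !inE eqxx.
rewrite sum2T; last first.
  apply/negP => /eqP E; have : u \in [set u'; v'] by rewrite -E !inE eqxx.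
  by rewrite !inE (negbTE uu') (negbTE uv').
rewrite (big_setD1 g gM) (big_setD1 h) /=; last by rewrite !inE eq_sym gh.
rewrite /wv; ring.
Qed.

Definition pp n (i : 'I_(4 * n)) : 'I_(4 * n) :=
  insubd i (if (i %% 2 == 1)%N then i.-1 else i.+1)%N.

Lemma ppE n (i : 'I_(4 * n)) : val (pp i) = (if (i %% 2 == 1)%N then i.-1 else i.+1)%N.
Proof.
rewrite /pp insubdK //; have := ltn_ord i.
case: eqP => h; rewrite /= => hi; lia.
Qed.

Lemma ppK n (i : 'I_(4 * n)) : pp (pp i) = i.
Proof.
apply: val_inj; rewrite ppE ppE.
case E: (i %% 2 == 1)%N; move/eqP: E => E /=; case: ifP => /eqP; lia.
Qed.

Lemma ppN n (i : 'I_(4 * n)) : pp i != i.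
Proof.
apply/negP => /eqP/(congr1 (@nat_of_ord _)); rewrite ppE; case: ifP => /eqP; lia.
Qed.

Lemma exists_pm n : exists M : {set {set 'I_(4 * n)}}, pmb M.
Proof.
exists [set [set i; pp i] | i : 'I_(4 * n)].
have key : forall i x : 'I_(4 * n), x \in [set i; pp i] -> [set i; pp i] = [set x; pp x].
  move=> i x /set2P [] -> //.
  by rewrite ppK setUC.
apply/and3P; split.
- apply/subsetP => A /imsetP [i _ ->]; by rewrite edge2 eq_sym ppN.
- apply/trivIsetP => A B /imsetP [i _ ->] /imsetP [j _ ->] AB.
  apply/disjP => x xi; apply/negP => xj; move/negP: AB; apply.
  by rewrite (key _ _ xi) (key _ _ xj).
- apply/eqP/setP => x; rewrite inE; apply/bigcupP; exists [set x; pp x].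
    by apply/imsetP; exists x.
  by rewrite !inE eqxx.
Qed.

Lemma pair_dec m (M : {set {set 'I_m}}) f : pmb M -> f \in M ->
  exists p p' : 'I_m, p != p' /\ f = [set p; p'].
Proof. by move=> pM fM; apply/cards2P; rewrite (pm_edge pM fM). Qed.

Lemma disj_pairs m (a b c d : 'I_m) : [disjoint [set a; b] & [set c; d]] ->
  [/\ a != c, a != d, b != c & b != d].
Proof.
rewrite disj2 !inE !negb_or => /andP[/andP[-> ->] /andP[-> ->]]; done.
Qed.

Lemma w_pm m s (u v : 'I_m) : (forall e, e \in edges m -> s e = 1 \/ s e = -1) ->
  u != v -> wv s u v = 1 \/ wv s u v = -1.
Proof. by move=> Hs uv; apply: Hs; rewrite edge2. Qed.

Lemma sw_min m s (M X : {set {set 'I_m}}) g h (u u' v v' : 'I_m) :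
  (forall N, pmb N -> sigma_sum s M <= `|sigma_sum s N|) ->
  pmb X -> g \in X -> h \in X -> g != h -> g = [set u; u'] -> h = [set v; v'] ->
  sigma_sum s M <= `|sigma_sum s X - s g - s h + wv s u v + wv s u' v'|.
Proof.
move=> Hmin pX gX hX gh eg eh; rewrite -(sw_sum s pX gX hX gh eg eh).
by apply: Hmin; apply: sw_pm.
Qed.

Lemma sw_mem m (M : {set {set 'I_m}}) g h (u u' v v' : 'I_m) f :
  f \in M -> f != g -> f != h -> f \in sw M g h u u' v v'.
Proof. by move=> fM fg fh; rewrite !inE fM fg fh. Qed.

Lemma sw_new1 m (M : {set {set 'I_m}}) g h (u u' v v' : 'I_m) :
  [set u; v] \in sw M g h u u' v v'.
Proof. by rewrite !inE eqxx orbT. Qed.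

Lemma sw_new2 m (M : {set {set 'I_m}}) g h (u u' v v' : 'I_m) :
  [set u'; v'] \in sw M g h u u' v v'.
Proof. by rewrite !inE eqxx !orbT. Qed.

Definition pm1 (x : int) := x = 1 \/ x = -1.
Lemma ar_par (a b c d : int) : pm1 a -> pm1 b -> pm1 c -> pm1 d -> (2 %| a + b + c + d)%Z.
Proof. rewrite /pm1; lia. Qed.
Lemma ar_jump (S a b y1 y2 : int) : pm1 a -> pm1 b -> pm1 y1 -> pm1 y2 -> 0 < S -> (2 %| S)%Z ->
  y1 + y2 < a + b -> S <= `|S - a - b + y1 + y2| ->
  [/\ S = 2, a = 1, b = 1, y1 = -1 & y2 = -1].
Proof. rewrite /pm1 => *; split; lia. Qed.
Lemma ar_R (a b y1 y2 z1 z2 : int) : pm1 a -> pm1 b -> pm1 y1 -> pm1 y2 -> pm1 z1 -> pm1 z2 ->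
  2 <= `|2 - a - b + y1 + y2| -> 2 <= `|-2 - a - b + y1 + y2| ->
  2 <= `|2 - a - b + z1 + z2| -> 2 <= `|-2 - a - b + z1 + z2| ->
  (4 %| y1 + z1 + z2 + y2)%Z.
Proof. rewrite /pm1; lia. Qed.
Lemma ar_two (x1 x2 x3 x4 : int) : pm1 x1 -> pm1 x2 -> pm1 x3 -> pm1 x4 ->
  2 <= `|x1 + x4| -> 2 <= `|x2 + x3| -> (4 %| x1 + x2 + x3 + x4)%Z.
Proof. rewrite /pm1; lia. Qed.
Lemma ar_final (K C z1 z2 : int) : pm1 z1 -> pm1 z2 -> (4 %| K)%Z -> (4 %| C)%Z ->
  2 <= `|z1 + z2| -> 1 + 1 + K + (-1 + z1 + z2 + -1) + C = 0 -> False.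
Proof. rewrite /pm1; lia. Qed.
Lemma ar_ineq (a b x1 x2 x3 x4 : int) : a + b <= x1 + x4 -> a + b <= x2 + x3 ->
  2 * (a + b) <= x1 + x2 + x3 + x4.
Proof. lia. Qed.
Lemma ar_case1 (kk S : int) : 1 <= kk -> 2 * kk * S <= S -> 0 < S -> False.
Proof. nia. Qed.
Lemma ar_norm (a b : int) : 2 <= `|2 - 1 - 1 + a + b| -> 2 <= `|a + b|.
Proof. by rewrite !subrr add0r. Qed.
Lemma ar_norm2 (a b : int) : 2 <= `|-2 - -1 - -1 + a + b| -> 2 <= `|a + b|.
Proof. have -> : -2 - -1 - -1 + a + b = a + b by ring. done. Qed.

Lemma core m (s : {set 'I_m} -> int) (M : {set {set 'I_m}}) :
  (forall e, e \in edges m -> s e = 1 \/ s e = -1) ->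
  sigma_sum s (edges m) = 0 ->
  pmb M -> 0 < sigma_sum s M ->
  (forall N, pmb N -> sigma_sum s M <= `|sigma_sum s N|) -> False.
Proof.
move=> Hs H0 pM Spos Hmin.
set S := sigma_sum s M in Spos Hmin.
have W : forall u v : 'I_m, u != v -> pm1 (wv s u v) := fun u v => @w_pm m s u v Hs.
have sE : forall f, f \in M -> pm1 (s f).
  by move=> f fM; apply: Hs; have /and3P[ME _ _] := pM; apply: (subsetP ME).
have /and3P[ME tM /eqP cM] := pM.
have Etot : KK s (cover M) = 0.
  by rewrite cM /KK; under eq_bigl do rewrite subsetT andbT.
have Sev : (2 %| S)%Z.
  have := KK_mod (s:=s) (d:=2) ME tM.
  rewrite Etot sub0r.
  have -> : (2 %| - \sum_(e in M) s e)%Z = (2 %| S)%Z by rewrite rpredN.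
  apply => f1 f2 f1M f2M f12.
  have [p [p' [pp' ef1]]] := pair_dec pM f1M.
  have [q [q' [qq' ef2]]] := pair_dec pM f2M.
  have [[_ _ pq pq'] [p'q p'q']] := sw_facts pM f1M f2M f12 ef1 ef2.
  rewrite ef1 ef2 cr2 //.
  exact: ar_par (W _ _ pq) (W _ _ pq') (W _ _ p'q) (W _ _ p'q').
have [lowP|nlow] := classic (exists g h (u u' v v' : 'I_m), [/\ g \in M, h \in M, g != h,
   g = [set u; u'] & h = [set v; v']] /\ wv s u v + wv s u' v' < s g + s h); last first.
  have H : forall g h (u u' v v' : 'I_m), g \in M -> h \in M -> g != h ->
      g = [set u; u'] -> h = [set v; v'] -> s g + s h <= wv s u v + wv s u' v'.
    move=> g h u u' v v' gM hM gh eg eh; rewrite leNgt; apply/negP => lt.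
    by apply: nlow; exists g, h, u, u', v, v'.
  have := KK_ineq (s:=s) ME tM.
  rewrite Etot add0r.
  have Mne : (0 < #|M|)%N.
    rewrite card_gt0; apply/negP => /eqP M0.
    by move: Spos; rewrite /S /sigma_sum M0 big_set0.
  have : forall f1 f2 : {set 'I_m}, f1 \in M -> f2 \in M -> f1 != f2 ->
      2 * (s f1 + s f2) <= cr s f1 f2.
    move=> f1 f2 f1M f2M f12.
    have [p [p' [pp' ef1]]] := pair_dec pM f1M.
    have [q [q' [qq' ef2]]] := pair_dec pM f2M.
    have h1 := H _ _ _ _ _ _ f1M f2M f12 ef1 ef2.
    have h2 := H _ _ p p' q' q f1M f2M f12 ef1 (etrans ef2 (setUC _ _)).
    have := ar_ineq h1 h2.
    by rewrite ef1 ef2 cr2 // -ef1 -ef2.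
  move=> Hc /(_ Hc).
  change (\sum_(e in M) s e) with S.
  move=> hh; apply: (ar_case1 _ hh Spos); by rewrite ler1n.
move: lowP => [g [h [u [u' [v [v' [[gM hM gh eg eh] lt]]]]]]].
have [[uu' vv' uv uv'] [u'v u'v']] := sw_facts pM gM hM gh eg eh.
have N1min := sw_min Hmin pM gM hM gh eg eh.
have [S2 g1 h1 y1 y2] := ar_jump (sE g gM) (sE h hM) (W u v uv) (W u' v' u'v') Spos Sev lt N1min.
have N2min := sw_min Hmin pM gM hM gh eg (etrans eh (setUC _ _)).
set M2 := sw M g h u u' v v'.
have pM2 : pmb M2 by apply: sw_pm.
have sM2 : sigma_sum s M2 = -2.
  rewrite /M2 (sw_sum s pM gM hM gh eg eh) -/S S2 g1 h1 y1 y2; done.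
set R := M :\ g :\ h.
have RM : R \subset M by rewrite /R; apply: subset_trans (subsetDl _ _) (subsetDl _ _).
have RE : R \subset edges m := subset_trans RM ME.
have tR : trivIset R := trivIsetS RM tM.
have MgE : M :\ g \subset edges m := subset_trans (subsetDl _ _) ME.
have tMg : trivIset (M :\ g) := trivIsetS (subsetDl _ _) tM.
have hMg : h \in M :\ g by rewrite !inE eq_sym gh.
have Ed : KK s (cover M) = s g + s h + KK s (cover R) + cr s g h +
   \sum_(f in R) (cr s g f + cr s h f).
  rewrite (KK_step s ME tM gM) (KK_step s MgE tMg hMg) (big_setD1 h hMg) big_split /=.
  rewrite -/R; ring.
have sR : \sum_(e in R) s e = 0.
  move: S2; rewrite /S /sigma_sum (big_setD1 g gM) (big_setD1 h hMg) /= -/R g1 h1.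
  move=> E; have -> : \sum_(e in R) s e = (1 + (1 + \sum_(e in R) s e)) - 2 by ring.
  by rewrite E subrr.
have crgh : cr s g h = wv s u v + wv s u v' + wv s u' v + wv s u' v' by rewrite eg eh cr2.
have RMem : forall f, f \in R -> [/\ f \in M, f != g & f != h].
  by move=> f; rewrite !inE => /and3P[fh fg fM].
have Kmod : (4 %| KK s (cover R))%Z.
  have := KK_mod (s:=s) (d:=4) RE tR; rewrite sR subr0; apply.
  move=> f1 f2 /RMem [f1M f1g f1h] /RMem [f2M f2g f2h] f12.
  have [p [p' [pp' ef1]]] := pair_dec pM f1M.
  have [q [q' [qq' ef2]]] := pair_dec pM f2M.
  have [[_ _ pq pq'] [p'q p'q']] := sw_facts pM f1M f2M f12 ef1 ef2.
  have f1M2 : f1 \in M2 by apply: sw_mem.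
  have f2M2 : f2 \in M2 by apply: sw_mem.
  have m1 := sw_min Hmin pM f1M f2M f12 ef1 ef2.
  have m2 := sw_min Hmin pM f1M f2M f12 ef1 (etrans ef2 (setUC _ _)).
  have m3 := sw_min Hmin pM2 f1M2 f2M2 f12 ef1 ef2.
  have m4 := sw_min Hmin pM2 f1M2 f2M2 f12 ef1 (etrans ef2 (setUC _ _)).
  rewrite -/S S2 in m1 m2 m3 m4; rewrite sM2 in m3 m4.
  rewrite ef1 ef2 cr2 //.
  exact: (ar_R (sE _ f1M) (sE _ f2M) (W _ _ pq) (W _ _ p'q') (W _ _ pq') (W _ _ p'q) m1 m3 m2 m4).
have Cmod : (4 %| \sum_(f in R) (cr s g f + cr s h f))%Z.
  apply: rpred_sum => f /RMem [fM fg fh].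
  have [p [p' [pp' ef]]] := pair_dec pM fM.
  have gf : g != f by rewrite eq_sym.
  have hf : h != f by rewrite eq_sym.
  have [[_ _ up up'] [u'p u'p']] := sw_facts pM gM fM gf eg ef.
  have [[_ _ vp vp'] [v'p v'p']] := sw_facts pM hM fM hf eh ef.
  have ef' := etrans ef (setUC _ _).
  rewrite eg eh ef !cr2 //.
  case: (sE f fM) => sf.
  - have m1 := sw_min Hmin pM gM fM gf eg ef.
    have m2 := sw_min Hmin pM gM fM gf eg ef'.
    have m3 := sw_min Hmin pM hM fM hf eh ef.
    have m4 := sw_min Hmin pM hM fM hf eh ef'.
    rewrite -/S S2 g1 h1 sf in m1 m2 m3 m4.
    move/ar_norm in m1; move/ar_norm in m2; move/ar_norm in m3; move/ar_norm in m4.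
    apply: rpredD.
    + exact: (ar_two (W _ _ up) (W _ _ up') (W _ _ u'p) (W _ _ u'p') m1 m2).
    + exact: (ar_two (W _ _ vp) (W _ _ vp') (W _ _ v'p) (W _ _ v'p') m3 m4).
  - have g'M2 : [set u; v] \in M2 by apply: sw_new1.
    have h'M2 : [set u'; v'] \in M2 by apply: sw_new2.
    have fM2 : f \in M2 by apply: sw_mem.
    have g'f : [set u; v] != f.
      apply/negP => /eqP E; have : u \in [set p; p'] by rewrite -ef -E !inE eqxx.
      by rewrite !inE (negbTE up) (negbTE up').
    have h'f : [set u'; v'] != f.
      apply/negP => /eqP E; have : u' \in [set p; p'] by rewrite -ef -E !inE eqxx.
      by rewrite !inE (negbTE u'p) (negbTE u'p').
    have m1 := sw_min Hmin pM2 g'M2 fM2 g'f (erefl _) ef.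
    have m2 := sw_min Hmin pM2 g'M2 fM2 g'f (erefl _) ef'.
    have m3 := sw_min Hmin pM2 h'M2 fM2 h'f (erefl _) ef.
    have m4 := sw_min Hmin pM2 h'M2 fM2 h'f (erefl _) ef'.
    have sg' : s [set u; v] = -1 by exact: y1.
    have sh' : s [set u'; v'] = -1 by exact: y2.
    rewrite -/S S2 sM2 sg' sh' sf in m1 m2 m3 m4.
    move/ar_norm2 in m1; move/ar_norm2 in m2; move/ar_norm2 in m3; move/ar_norm2 in m4.
    have d1 := ar_two (W _ _ up) (W _ _ up') (W _ _ vp) (W _ _ vp') m1 m2.
    have d2 := ar_two (W _ _ u'p) (W _ _ u'p') (W _ _ v'p) (W _ _ v'p') m3 m4.
    set a1 := wv s u p in d1 d2 *; set a2 := wv s u p' in d1 d2 *.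
    set a3 := wv s u' p in d1 d2 *; set a4 := wv s u' p' in d1 d2 *.
    set b1 := wv s v p in d1 d2 *; set b2 := wv s v p' in d1 d2 *.
    set b3 := wv s v' p in d1 d2 *; set b4 := wv s v' p' in d1 d2 *.
    have -> : a1 + a2 + a3 + a4 + (b1 + b2 + b3 + b4) =
      (a1 + a2 + b1 + b2) + (a3 + a4 + b3 + b4) by ring.
    exact: rpredD.
rewrite -/S S2 g1 h1 in N2min; move/ar_norm in N2min.
apply: (ar_final (W _ _ uv') (W _ _ u'v) Kmod Cmod N2min).
by move: Etot; rewrite Ed g1 h1 crgh y1 y2.
Qed.

Unset Implicit Arguments.

Theorem theorem1 (n : nat) (sigma : {set 'I_(4 * n)} -> int) :
  (0 < n)%N ->
  (forall e, e \in edges (4 * n) -> sigma e = 1 \/ sigma e = -1) ->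
  sigma_sum sigma (edges (4 * n)) = 0 ->
  exists M : {set {set 'I_(4 * n)}},
    perfect_matching M /\ sigma_sum sigma M = 0.
Proof.
move=> _ Hs H0.
have [M0 pM0] := exists_pm n.
case: (@arg_minnP _ M0 (@pmb (4 * n)) (fun M => absz (sigma_sum sigma M)) pM0) => M pM Mmin.
exists M; split; first by apply/pmP.
have Hle : forall N, pmb N -> `|sigma_sum sigma M| <= `|sigma_sum sigma N|.
  move=> N pN; rewrite -!abszE lez_nat; exact: Mmin.
have [lt|gt|//] := ltrgtP (sigma_sum sigma M) 0.
- exfalso.
  pose s' := fun e => - sigma e.
  have ss : forall F, sigma_sum s' F = - sigma_sum sigma F.
    by move=> F; rewrite /sigma_sum /s' sumrN.
  apply: (@core (4 * n) s' M) => //.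
  + move=> e /Hs []; rewrite /s' => ->; [right|left]; rewrite ?opprK //.
  + by rewrite ss H0 oppr0.
  + by rewrite ss oppr_gt0.
  + move=> N pN; rewrite !ss normrN.
    by have := Hle N pN; rewrite ltr0_norm.
- exfalso; apply: (@core (4 * n) sigma M) => // N pN.
  by have := Hle N pN; rewrite gtr0_norm.
Qed.
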